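(* Let $a_1,\dots,a_{12},b_1,\dots,b_{12}\in\mathbb{C}^6$ be row vectors of length 6 such that the three $12\times12$ matrices $M$ with rows $(a_k\,|\,b_k)$, $k=1,\dots,12$; $M_R$ with rows, in order, $(a_1|a_2),(b_1|b_2),(a_3|a_4),(b_3|b_4),(a_5|a_6),(b_5|b_6),(a_7|a_8),(b_7|b_8),(a_9|a_{10}),(b_9|b_{10}),(a_{11}|a_{12}),(b_{11}|b_{12})$; $M_\Gamma$ with rows, in order, $(a_1|a_3),(a_2|a_4),(b_1|b_3),(b_2|b_4),(a_5|a_7),(a_6|a_8),(b_5|b_7),(b_6|b_8),(a_9|a_{11}),(a_{10}|a_{12}),(b_9|b_{11}),(b_{10}|b_{12})$ are all unitary (here $(x|y)$ denotes the concatenation of two length-6 vectors into a length-12 row). Define further vectors by, for $k=1,\dots,4$: $c_{4+k}=a_k,\ d_{4+k}=b_k,\ e_{8+k}=a_k,\ f_{8+k}=b_k$; $c_{8+k}=a_{4+k},\ d_{8+k}=b_{4+k},\ e_k=a_{4+k},\ f_k=b_{4+k}$; $c_k=a_{8+k},\ d_k=b_{8+k},\ e_{4+k}=a_{8+k},\ f_{4+k}=b_{8+k}$. Let $U$ be the $36\times36$ matrix each of whose rows is split into six consecutive column blocks of length 6, where every row has exactly two possibly nonzero adjacent column blocks and all other entries zero, specified as follows (a pair $xy$ placed in column blocks $(p,p+1)$): rows 1–2: $a_1b_1,a_2b_2$ in blocks (1,2); rows 3–4: $c_1d_1,c_2d_2$ in (3,4); rows 5–6: $e_1f_1,e_2f_2$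 in (5,6); rows 7–8: $a_3b_3,a_4b_4$ in (1,2); rows 9–10: $c_3d_3,c_4d_4$ in (3,4); rows 11–14: $e_3f_3,e_4f_4,e_5f_5,e_6f_6$ in (5,6); rows 15–16: $a_5b_5,a_6b_6$ in (1,2); rows 17–18: $c_5d_5,c_6d_6$ in (3,4); rows 19–20: $e_7f_7,e_8f_8$ in (5,6); rows 21–22: $a_7b_7,a_8b_8$ in (1,2); rows 23–26: $c_7d_7,c_8d_8,c_9d_9,c_{10}d_{10}$ in (3,4); rows 27–28: $e_9f_9,e_{10}f_{10}$ in (5,6); rows 29–30: $a_9b_9,a_{10}b_{10}$ in (1,2); rows 31–32: $c_{11}d_{11},c_{12}d_{12}$ in (3,4); rows 33–34: $e_{11}f_{11},e_{12}f_{12}$ in (5,6); rows 35–36: $a_{11}b_{11},a_{12}b_{12}$ in (1,2). Then $U$ is a multiunitary matrix of size 36.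
   Context: Index rows and columns of a $36\times36$ matrix by pairs $(i,j)$, $i,j\in\{1,\dots,6\}$, with $(i,j)\mapsto 6(i-1)+j$. The reshuffling of $M$ is $M^R_{(i,j),(k,l)}=M_{(i,k),(j,l)}$ and the partial transpose is $M^\Gamma_{(i,j),(k,l)}=M_{(i,l),(k,j)}$. A matrix $U$ of size 36 is multiunitary if $U$, $U^R$ and $U^\Gamma$ are all unitary. *)

(* Defs.v *)
(* Complex scalars: an arbitrary numClosedFieldType C
   (e.g. the complex numbers), with conjugation x^* . *)
From HB Require Import structures.
From mathcomp Require Import all_boot all_order all_algebra.
Set Implicit Arguments. Unset Strict Implicit. Unset Printing Implicit Defensive.
Import Order.TTheory GRing.Theory Num.Theory.
Local Open Scope ring_scope.

Section Defs.
Variable C : numClosedFieldType.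

Definition adjmx (n : nat) (M : 'M[C]_n) : 'M[C]_n := (map_mx (fun x => x^*) M)^T.

Definition unitary (n : nat) (M : 'M[C]_n) : Prop :=
  M *m adjmx M = 1%:M /\ adjmx M *m M = 1%:M.

(* index (i,j) |-> 6 i + j (0-based version of 6(i-1)+j) *)
Definition pidx (i j : nat) : 'I_36 := inord (6 * i + j).

(* reshuffling: M^R_{(i,j),(k,l)} = M_{(i,k),(j,l)} *)
Definition reshuffle (M : 'M[C]_36) : 'M[C]_36 :=
  \matrix_(r < 36, s < 36)
    M (pidx (r %/ 6) (s %/ 6)) (pidx (r %% 6) (s %% 6)).

(* partial transpose: M^Gamma_{(i,j),(k,l)} = M_{(i,l),(k,j)} *)
Definition ptranspose (M : 'M[C]_36) : 'M[C]_36 :=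
  \matrix_(r < 36, s < 36)
    M (pidx (r %/ 6) (s %% 6)) (pidx (s %/ 6) (r %% 6)).

Definition multiunitary (U : 'M[C]_36) : Prop :=
  [/\ unitary U, unitary (reshuffle U) & unitary (ptranspose U)].

Definition cat6 (x y : 'rV[C]_6) : 'rV[C]_12 :=
  \row_(j < 12) (if (j < 6)%N then x 0 (inord j) else y 0 (inord (j - 6))).

Definition mx_of_rows (n : nat) (s : seq 'rV[C]_n) : 'M[C]_n :=
  \matrix_(k < n, j < n) (nth 0 s k) 0 j.

Definition blk (p : nat) (x y : 'rV[C]_6) : 'rV[C]_36 :=
  \row_(j < 36) (if (j %/ 6 == p.-1)%N then x 0 (inord (j %% 6))
                 else if (j %/ 6 == p)%N then y 0 (inord (j %% 6)) else 0).

(* 1-based access to a family indexed by 'I_12 *)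
Definition at1 (a : 'I_12 -> 'rV[C]_6) (n : nat) : 'rV[C]_6 := a (inord n.-1).

Definition cvec (a : 'I_12 -> 'rV[C]_6) (n : nat) : 'rV[C]_6 :=
  if (n <= 4)%N then at1 a (n + 8) else at1 a (n - 4).
Definition evec (a : 'I_12 -> 'rV[C]_6) (n : nat) : 'rV[C]_6 :=
  if (n <= 8)%N then at1 a (n + 4) else at1 a (n - 8).

Definition Mmat (a b : 'I_12 -> 'rV[C]_6) : 'M[C]_12 :=
  mx_of_rows [seq cat6 (at1 a k) (at1 b k) | k <- iota 1 12].

Definition MRmat (a b : 'I_12 -> 'rV[C]_6) : 'M[C]_12 :=
  let A := at1 a in let B := at1 b in
  mx_of_rows [:: cat6 (A 1) (A 2); cat6 (B 1) (B 2); cat6 (A 3) (A 4); cat6 (B 3) (B 4);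
                 cat6 (A 5) (A 6); cat6 (B 5) (B 6); cat6 (A 7) (A 8); cat6 (B 7) (B 8);
                 cat6 (A 9) (A 10); cat6 (B 9) (B 10); cat6 (A 11) (A 12); cat6 (B 11) (B 12)].

Definition MGmat (a b : 'I_12 -> 'rV[C]_6) : 'M[C]_12 :=
  let A := at1 a in let B := at1 b in
  mx_of_rows [:: cat6 (A 1) (A 3); cat6 (A 2) (A 4); cat6 (B 1) (B 3); cat6 (B 2) (B 4);
                 cat6 (A 5) (A 7); cat6 (A 6) (A 8); cat6 (B 5) (B 7); cat6 (B 6) (B 8);
                 cat6 (A 9) (A 11); cat6 (A 10) (A 12); cat6 (B 9) (B 11); cat6 (B 10) (B 12)].

Definition Umat (a b : 'I_12 -> 'rV[C]_6) : 'M[C]_36 :=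
  let A := at1 a in let B := at1 b in
  let Cv := cvec a in let D := cvec b in
  let E := evec a in let F := evec b in
  mx_of_rows
    [:: blk 1 (A 1) (B 1); blk 1 (A 2) (B 2);
        blk 3 (Cv 1) (D 1); blk 3 (Cv 2) (D 2);
        blk 5 (E 1) (F 1); blk 5 (E 2) (F 2);
        blk 1 (A 3) (B 3); blk 1 (A 4) (B 4);
        blk 3 (Cv 3) (D 3); blk 3 (Cv 4) (D 4);
        blk 5 (E 3) (F 3); blk 5 (E 4) (F 4);
        blk 5 (E 5) (F 5); blk 5 (E 6) (F 6);
        blk 1 (A 5) (B 5); blk 1 (A 6) (B 6);
        blk 3 (Cv 5) (D 5); blk 3 (Cv 6) (D 6);
        blk 5 (E 7) (F 7); blk 5 (E 8) (F 8);
        blk 1 (A 7) (B 7); blk 1 (A 8) (B 8);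
        blk 3 (Cv 7) (D 7); blk 3 (Cv 8) (D 8);
        blk 3 (Cv 9) (D 9); blk 3 (Cv 10) (D 10);
        blk 5 (E 9) (F 9); blk 5 (E 10) (F 10);
        blk 1 (A 9) (B 9); blk 1 (A 10) (B 10);
        blk 3 (Cv 11) (D 11); blk 3 (Cv 12) (D 12);
        blk 5 (E 11) (F 11); blk 5 (E 12) (F 12);
        blk 1 (A 11) (B 11); blk 1 (A 12) (B 12)].

End Defs.

(* Main.v *)
Require Import Defs.
From mathcomp Require Import all_boot all_order all_algebra.
From mathcomp Require Import fingroup perm zify.
Set Implicit Arguments. Unset Strict Implicit. Unset Printing Implicit Defensive.
Import Order.TTheory GRing.Theory Num.Theory.

Definition SLU : seq (nat*(nat*nat)*(nat*nat)) := [:: (1,(1,0),(2,0)); (1,(1,1),(2,1)); (3,(1,8),(2,8)); (3,(1,9),(2,9)); (5,(1,4),(2,4)); (5,(1,5),(2,5)); (1,(1,2),(2,2)); (1,(1,3),(2,3)); (3,(1,10),(2,10)); (3,(1,11),(2,11)); (5,(1,6),(2,6)); (5,(1,7),(2,7)); (5,(1,8),(2,8)); (5,(1,9),(2,9)); (1,(1,4),(2,4)); (1,(1,5),(2,5)); (3,(1,0),(2,0)); (3,(1,1),(2,1)); (5,(1,10),(2,10)); (5,(1,11),(2,11)); (1,(1,6),(2,6)); (1,(1,7),(2,7)); (3,(1,2),(2,2)); (3,(1,3),(2,3)); (3,(1,4),(2,4)); (3,(1,5),(2,5)); (5,(1,0),(2,0)); (5,(1,1),(2,1)); (1,(1,8),(2,8));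 (1,(1,9),(2,9)); (3,(1,6),(2,6)); (3,(1,7),(2,7)); (5,(1,2),(2,2)); (5,(1,3),(2,3)); (1,(1,10),(2,10)); (1,(1,11),(2,11))].
Definition SLM : seq ((nat*nat)*(nat*nat)) := [:: ((1,0),(2,0)); ((1,1),(2,1)); ((1,2),(2,2)); ((1,3),(2,3)); ((1,4),(2,4)); ((1,5),(2,5)); ((1,6),(2,6)); ((1,7),(2,7)); ((1,8),(2,8)); ((1,9),(2,9)); ((1,10),(2,10)); ((1,11),(2,11))].
Definition SLR : seq ((nat*nat)*(nat*nat)) := [:: ((1,0),(1,1)); ((2,0),(2,1)); ((1,2),(1,3)); ((2,2),(2,3)); ((1,4),(1,5)); ((2,4),(2,5)); ((1,6),(1,7)); ((2,6),(2,7)); ((1,8),(1,9)); ((2,8),(2,9)); ((1,10),(1,11)); ((2,10),(2,11))].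
Definition SLG : seq ((nat*nat)*(nat*nat)) := [:: ((1,0),(1,2)); ((1,1),(1,3)); ((2,0),(2,2)); ((2,1),(2,3)); ((1,4),(1,6)); ((1,5),(1,7)); ((2,4),(2,6)); ((2,5),(2,7)); ((1,8),(1,10)); ((1,9),(1,11)); ((2,8),(2,10)); ((2,9),(2,11))].

Definition F1U := [:: 0; 1; 20; 21; 28; 29; 2; 3; 22; 23; 30; 31; 32; 33; 4; 5; 12; 13; 34; 35; 6; 7; 14; 15; 16; 17; 24; 25; 8; 9; 18; 19; 26; 27; 10; 11].
Definition F1R := [:: 0; 1; 20; 21; 28; 29; 2; 3; 22; 23; 30; 31; 16; 17; 24; 25; 8; 9; 18; 19; 26; 27; 10; 11; 32; 33; 4; 5; 12; 13; 34; 35; 6; 7; 14; 15].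
Definition F1G := [:: 24; 25; 26; 27; 28; 29; 30; 31; 32; 33; 34; 35; 0; 1; 2; 3; 4; 5; 6; 7; 8; 9; 10; 11; 12; 13; 14; 15; 16; 17; 18; 19; 20; 21; 22; 23].
Definition F2G := [:: 24; 25; 4; 5; 20; 21; 26; 27; 6; 7; 22; 23; 16; 17; 32; 33; 0; 1; 18; 19; 34; 35; 2; 3; 8; 9; 12; 13; 28; 29; 10; 11; 14; 15; 30; 31].

Definition Sym := (nat * nat * nat)%type.

Definition sentry (SL : seq (nat*(nat*nat)*(nat*nat))) (r s : nat) : Sym :=
  let d := nth (0,(0,0),(0,0)) SL r in
  if s %/ 6 == d.1.1.-1 then (d.1.2, s %% 6)
  else if s %/ 6 == d.1.1 then (d.2, s %% 6) else ((0,0),0).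

Definition e12 (SL : seq ((nat*nat)*(nat*nat))) (i j : nat) : Sym :=
  let d := nth ((0,0),(0,0)) SL i in
  if j < 6 then (d.1, j) else (d.2, j - 6).

Definition check (ET EN : nat -> nat -> Sym) (f1 f2 : seq nat) : bool :=
  all (fun r => all (fun s => ET r s ==
     (if nth 0 f1 r %/ 12 == nth 0 f2 s %/ 12
      then EN (nth 0 f1 r %% 12) (nth 0 f2 s %% 12) else ((0,0),0))) (iota 0 36)) (iota 0 36).

Definition EU r s := sentry SLU r s.
Definition ER r s := sentry SLU (6 * (r %/ 6) + s %/ 6) (6 * (r %% 6) + s %% 6).
Definition EG r s := sentry SLU (6 * (r %/ 6) + s %% 6) (6 * (s %/ 6) + r %% 6).

Lemma checkU : check EU (e12 SLM) F1U (iota 0 36). Proof. vm_compute. reflexivity. Qed.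
Lemma checkR : check ER (e12 SLR) F1R (iota 0 36). Proof. vm_compute. reflexivity. Qed.
Lemma checkG : check EG (fun i j => e12 SLG j i) F1G F2G. Proof. vm_compute. reflexivity. Qed.

Local Open Scope ring_scope.

Section Gen.
Variable C : numClosedFieldType.

Lemma zero_entry m n (i : 'I_m) (j : 'I_n) : (0 : 'M[C]_(m,n)) i j = 0.
Proof. by rewrite mxE. Qed.

Lemma adjmxM n (X Y : 'M[C]_n) : adjmx (X *m Y) = adjmx Y *m adjmx X.
Proof. by rewrite /adjmx map_mxM trmx_mul. Qed.

Lemma adjmx_perm n (p : 'S_n) : adjmx (perm_mx p : 'M[C]_n) = perm_mx p^-1.
Proof. by rewrite /adjmx map_perm_mx tr_perm_mx. Qed.

Lemma adjmxE n (X : 'M[C]_n) i j : adjmx X i j = (X j i)^*.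
Proof. by rewrite /adjmx !mxE. Qed.

Lemma sum36 (G : nat -> C) : \sum_(k < 36) G k =
  \sum_(l < 12) G l + \sum_(l < 12) G (12 + l)%N + \sum_(l < 12) G (24 + l)%N.
Proof.
have E n (F : nat -> C) : \sum_(l < n) F l = \sum_(l <- iota 0 n) F l.
  by rewrite -(big_mkord xpredT) /index_iota subn0.
rewrite !E.
have -> : iota 0 36 = iota 0 12 ++ map (addn 12) (iota 0 12) ++ map (addn 24) (iota 0 12).
  by [].
rewrite (E 12 (fun l => G (12 + l)%N)) (E 12 (fun l => G (24 + l)%N)).
by rewrite !big_cat !big_map -addrA.
Qed.

Definition blkdiag (N : 'M[C]_12) : 'M[C]_36 :=
  \matrix_(i, j) if (i %/ 12 == j %/ 12)%N then N (inord (i %% 12)%N) (inord (j %% 12)%N) else 0.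

Lemma ifmul (c1 c2 : bool) (X Y : C) :
  (if c1 then X else 0) * (if c2 then Y else 0)^* = (c1 && c2)%:R * (X * Y^*).
Proof. by case: c1; case: c2; rewrite /= ?mul1r ?mul0r ?conjC0 ?mulr0. Qed.

Lemma blkdiag_unit N : N *m adjmx N = 1%:M -> blkdiag N *m adjmx (blkdiag N) = 1%:M.
Proof.
move=> HN; apply/matrixP => i j.
have HNe x y : \sum_(l < 12) N x l * (N y l)^* = (x == y)%:R.
  have := congr1 (fun M : 'M[C]_12 => M x y) HN; rewrite !mxE => <-.
  by apply: eq_bigr => l _; rewrite adjmxE.
have Bk (x : 'I_36) n m (l : 'I_12) : n = (12 * m + l)%N -> (m < 3)%N ->
    blkdiag N x (inord n) = if (x %/ 12 == m)%N then N (inord (x %% 12)%N) l else 0.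
  move=> -> Hm; rewrite mxE inordK; last by have := ltn_ord l; lia.
  have -> : ((12 * m + l) %/ 12 = m)%N by have := ltn_ord l; lia.
  have -> : ((12 * m + l) %% 12 = l)%N by have := ltn_ord l; lia.
  by rewrite inord_val.
rewrite !mxE.
rewrite (eq_bigr (fun k : 'I_36 => blkdiag N i (inord k) * (blkdiag N j (inord k))^*));
  last by move=> k _; rewrite adjmxE inord_val.
rewrite (sum36 (fun n => blkdiag N i (inord n) * (blkdiag N j (inord n))^*)).
rewrite (eq_bigr (fun l : 'I_12 => ((i %/ 12 == 0)%N && (j %/ 12 == 0)%N)%:R * (N (inord (i %% 12)%N) l * (N (inord (j %% 12)%N) l)^*)));
  last by move=> l _; rewrite (Bk i l 0 l) // (Bk j l 0 l) // ifmul.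
rewrite [X in _ + X + _](eq_bigr (fun l : 'I_12 => ((i %/ 12 == 1)%N && (j %/ 12 == 1)%N)%:R * (N (inord (i %% 12)%N) l * (N (inord (j %% 12)%N) l)^*)));
  last by move=> l _; rewrite (Bk i _ 1 l) // (Bk j _ 1 l) // ifmul.
rewrite [X in _ + X](eq_bigr (fun l : 'I_12 => ((i %/ 12 == 2)%N && (j %/ 12 == 2)%N)%:R * (N (inord (i %% 12)%N) l * (N (inord (j %% 12)%N) l)^*)));
  last by move=> l _; rewrite (Bk i _ 2 l) // (Bk j _ 2 l) // ifmul.
rewrite -!mulr_sumr !HNe -!natrM !mulnb.
have -> : (inord (i %% 12)%N == inord (j %% 12)%N :> 'I_12) = (i %% 12 == j %% 12)%N.
  by rewrite -val_eqE /= !inordK ?ltn_pmod.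
have key : (i == j) = (i %/ 12 == j %/ 12)%N && (i %% 12 == j %% 12)%N.
  apply/eqP/andP => [->//|[/eqP H1 /eqP H2]]; apply: val_inj => /=.
  by rewrite (divn_eq i 12) (divn_eq j 12) H1 H2.
rewrite key.
have : (i %/ 12 < 3)%N by have := ltn_ord i; lia.
move: (i %/ 12)%N (j %/ 12)%N (i == j %[mod 12]) => u v w.
case: w; last by rewrite !andbF !addr0.
rewrite !andbT.
by case: u => [|[|[|u]]] // _; case: v => [|[|[|v]]]; rewrite /= ?add0r ?addr0.
Qed.

Lemma unitary_of_perm (T B : 'M[C]_36) (p1 p2 : 'S_36) :
  (forall r s, T r s = B (p1 r) (p2 s)) -> B *m adjmx B = 1%:M -> unitary T.
Proof.
move=> HT HB.
have -> : T = perm_mx p1 *m B *m perm_mx p2^-1.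
  by apply/matrixP => r s; rewrite -row_permE -col_permE !mxE HT.
have U1 : (perm_mx p1 *m B *m perm_mx p2^-1) *m adjmx (perm_mx p1 *m B *m perm_mx p2^-1) = 1%:M.
  rewrite !adjmxM !adjmx_perm invgK.
  rewrite -!mulmxA (mulmxA (perm_mx p2^-1)) -perm_mxM mulVg perm_mx1 mul1mx.
  by rewrite (mulmxA B) HB mul1mx -perm_mxM mulgV perm_mx1.
by split; [exact: U1 | exact: mulmx1C U1].
Qed.

Definition fperm (f : seq nat) := fun r : 'I_36 => (inord (nth 0%N f r) : 'I_36).

Lemma fperm_inj f : size f = 36%N -> uniq f -> all (fun x => x < 36)%N f -> injective (fperm f).
Proof.
move=> Hs Hu Ha r r'.
have B k : (k < 36)%N -> (nth 0%N f k < 36)%N.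
  by move=> Hk; apply: (allP Ha); apply: mem_nth; rewrite Hs.
move/(congr1 val) => /=; rewrite !inordK ?B // => E.
apply: val_inj; apply/eqP; by rewrite -(nth_uniq 0%N _ _ Hu) ?Hs ?ltn_ord //; apply/eqP.
Qed.
End Gen.

Section Sym.
Variable C : numClosedFieldType.
Variables a b : 'I_12 -> 'rV[C]_6.

Definition vecof (x : nat * nat) : 'rV[C]_6 :=
  if (x.1 == 1)%N then a (inord x.2) else if (x.1 == 2)%N then b (inord x.2) else 0.
Definition interp (e : Sym) : C := vecof e.1 0 (inord e.2).
Definition irow (d : nat * (nat*nat) * (nat*nat)) : 'rV[C]_36 := blk d.1.1 (vecof d.1.2) (vecof d.2).
Definition irow12 (d : (nat*nat) * (nat*nat)) : 'rV[C]_12 := cat6 (vecof d.1) (vecof d.2).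

Lemma interp0 : interp ((0,0),0)%N = 0.
Proof. by rewrite /interp /vecof /= mxE. Qed.

Lemma entryU SL : size SL = 36%N -> forall r s : 'I_36,
  mx_of_rows (map irow SL) r s = interp (sentry SL r s).
Proof.
move=> Hs r s; rewrite /mx_of_rows mxE (nth_map (0,(0,0),(0,0))%N) ?Hs ?ltn_ord //.
rewrite /sentry /irow /blk mxE.
case: ifP => _ //; case: ifP => _ //.
by rewrite interp0.
Qed.

Lemma entry12 SL : size SL = 12%N -> forall i j : 'I_12,
  mx_of_rows (map irow12 SL) i j = interp (e12 SL i j).
Proof.
move=> Hs i j; rewrite /mx_of_rows mxE (nth_map ((0,0),(0,0))%N) ?Hs ?ltn_ord //.
by rewrite /e12 /irow12 /cat6 mxE; case: ifP.
Qed.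

Lemma pidxE i j : (i < 6)%N -> (j < 6)%N -> nat_of_ord (pidx i j) = (6 * i + j)%N.
Proof. by move=> Hi Hj; rewrite /pidx inordK //; lia. Qed.

Lemma Umat_sym : Umat a b = mx_of_rows (map irow SLU).
Proof. reflexivity. Qed.
Lemma Mmat_sym : Mmat a b = mx_of_rows (map irow12 SLM).
Proof. reflexivity. Qed.
Lemma MRmat_sym : MRmat a b = mx_of_rows (map irow12 SLR).
Proof. reflexivity. Qed.
Lemma MGmat_sym : MGmat a b = mx_of_rows (map irow12 SLG).
Proof. reflexivity. Qed.

Lemma main_gen (T : 'M[C]_36) (N : 'M[C]_12) (ET EN : nat -> nat -> Sym) (f1 f2 : seq nat) :
  (forall r s : 'I_36, T r s = interp (ET r s)) ->
  (forall i j : 'I_12, N i j = interp (EN i j)) ->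
  size f1 = 36%N -> uniq f1 -> all (fun x => x < 36)%N f1 ->
  size f2 = 36%N -> uniq f2 -> all (fun x => x < 36)%N f2 ->
  check ET EN f1 f2 -> N *m adjmx N = 1%:M -> unitary T.
Proof.
move=> HT HN s1 u1 a1 s2 u2 a2 Hc HNN.
apply: (@unitary_of_perm _ T (blkdiag N) (perm (fperm_inj s1 u1 a1)) (perm (fperm_inj s2 u2 a2))) => //.
move=> r s; rewrite !permE /blkdiag mxE /fperm.
have B f (k : 'I_36) : size f = 36%N -> all (fun x => x < 36)%N f -> (nth 0%N f k < 36)%N.
  by move=> Hs Ha; apply: (allP Ha); apply: mem_nth; rewrite Hs.
rewrite (inordK (B f1 r s1 a1)) (inordK (B f2 s s2 a2)).
move/allP: Hc => /(_ r); rewrite mem_iota ltn_ord => /(_ isT) /allP /(_ s).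
rewrite mem_iota ltn_ord => /(_ isT) /eqP E.
rewrite HT E; case: ifP => _; last by rewrite interp0.
  by rewrite HN (@inordK 11) ?ltn_pmod // (@inordK 11) ?ltn_pmod.
exact: blkdiag_unit.
Qed.

End Sym.

Theorem mainTheorem14 (C : numClosedFieldType) (a b : 'I_12 -> 'rV[C]_6) :
  unitary (Mmat a b) -> unitary (MRmat a b) -> unitary (MGmat a b) ->
  multiunitary (Umat a b).
Proof.
move=> [HM _] [HR _] [_ HG]; split.
- apply: (@main_gen C a b _ (Mmat a b) EU (e12 SLM) F1U (iota 0 36)) => //.
  + by move=> r s; rewrite Umat_sym entryU.
  + by move=> i j; rewrite Mmat_sym entry12.
- apply: (@main_gen C a b _ (MRmat a b) ER (e12 SLR) F1R (iota 0 36)) => //.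
  + move=> r s; have Hr := ltn_ord r; have Hs := ltn_ord s.
    rewrite Umat_sym mxE entryU // !pidxE //; lia.
  + by move=> i j; rewrite MRmat_sym entry12.
- apply: (@main_gen C a b _ (MGmat a b)^T EG (fun i j => e12 SLG j i) F1G F2G) => //.
  + move=> r s; have Hr := ltn_ord r; have Hs := ltn_ord s.
    rewrite Umat_sym mxE entryU // !pidxE //; lia.
  + by move=> i j; rewrite mxE MGmat_sym entry12.
  + have := congr1 trmx HG; rewrite trmx_mul trmx1 /adjmx trmxK => <-.
    by rewrite map_trmx trmxK.
Qed.
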